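(* Let $n\geq1$ be an integer, $p>1$, $q=pe^{2\pi i/n}$, and let $A=\{a_1,\dots,a_m\}\subset\mathbb R$ be a finite nonempty set. Let $\Lambda_{n,p,A}=\{\sum_{j=1}^\infty x_jq^{-j}\mid x_j\in A\}$, let $f_i(x)=\frac1q(x+a_i)$ for $i=1,\dots,m$, and for $X\subset\mathbb C$ let $\mathcal F_{n,p,A}(X)=\bigcup_{i=1}^m f_i(X)$. Then $\Lambda_{n,p,A}$ is convex if and only if $\mathcal F_{n,p,A}(\mathrm{conv}(\Lambda_{n,p,A}))$ is convex.
   Context: $\mathrm{conv}$ denotes convex hull in $\mathbb C\cong\mathbb R^2$. *)

(* Defs.v *)
From Stdlib Require Import Reals List.
From Coquelicot Require Import Coquelicot.
Open Scope R_scope.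

Definition qc (n : nat) (p : R) : C :=
  (p * cos (2 * PI / INR n), p * sin (2 * PI / INR n)).

Fixpoint Cpow (z : C) (k : nat) : C :=
  match k with O => RtoC 1 | S k' => Cmult z (Cpow z k') end.

(* Lambda_{n,p,A} = { sum_{j>=1} x_j q^{-j} | x_j in A }.
   Index shift: term j (j >= 0) is x_j * q^{-(j+1)}. *)
Definition Lambda (n : nat) (p : R) (A : list R) : C -> Prop :=
  fun z => exists x : nat -> R, (forall j, In (x j) A) /\
    is_series (fun j => Cmult (RtoC (x j)) (Cinv (Cpow (qc n p) (S j)))) z.

Definition convex_set (S : C -> Prop) : Prop :=
  forall z w, S z -> S w -> forall t : R, 0 <= t <= 1 ->
    S (Cplus (Cmult (RtoC t) z) (Cmult (RtoC (1 - t)) w)).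

Definition conv (S : C -> Prop) : C -> Prop :=
  fun z => forall K : C -> Prop, convex_set K -> (forall w, S w -> K w) -> K z.

Definition fmap (n : nat) (p a : R) (x : C) : C :=
  Cdiv (Cplus x (RtoC a)) (qc n p).

Definition Fop (n : nat) (p : R) (A : list R) (X : C -> Prop) : C -> Prop :=
  fun z => exists a, In a A /\ exists x, X x /\ z = fmap n p a x.

(* Main.v *)
Require Import Defs.
From Stdlib Require Import Reals List Lra Lia ClassicalEpsilon.
From Coquelicot Require Import Coquelicot.
Open Scope R_scope.

Section Aux.
Variables (n : nat) (p : R) (A : list R).
Hypothesis Hp : 1 < p.
Let q := qc n p.

Lemma Cmod_q : Cmod q = p.
Proof.
  unfold q, qc, Cmod; simpl.
  replace ((p * cos (2 * PI / INR n)) * ((p * cos (2 * PI / INR n)) * 1) +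
     (p * sin (2 * PI / INR n)) * ((p * sin (2 * PI / INR n)) * 1)) with (p ^ 2).
  - apply sqrt_pow2; lra.
  - pose proof (sin2_cos2 (2 * PI / INR n)). unfold Rsqr in H. simpl. nra.
Qed.

Lemma q_nz : q <> RtoC 0.
Proof. intro H. pose proof Cmod_q. rewrite H, Cmod_0 in H0. lra. Qed.

Lemma Cmod_Cpow k : Cmod (Defs.Cpow q k) = p ^ k.
Proof.
  induction k; simpl. apply Cmod_1. rewrite Cmod_mult, IHk, Cmod_q. reflexivity.
Qed.

Lemma Cpow_nz k : Defs.Cpow q k <> RtoC 0.
Proof.
  intro H. pose proof (Cmod_Cpow k). rewrite H, Cmod_0 in H0.
  pose proof (pow_lt p k ltac:(lra)). lra.
Qed.

Lemma prepend a w : In a A -> Lambda n p A w -> Lambda n p A (fmap n p a w).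
Proof.
  intros Ha [x [Hx Hs]].
  exists (fun j => match j with O => a | S j => x j end). split.
  - intros [|j]; auto.
  - apply is_series_decr_1.
    apply (is_series_scal (Cinv q)) in Hs.
    match goal with |- is_series _ ?L => replace L with (scal (Cinv q) w) end.
    + eapply is_series_ext; [|exact Hs].
      intro k. simpl. change (Cinv q * (x k * Cinv (q * Defs.Cpow q k)) =
         x k * Cinv (q * (q * Defs.Cpow q k)))%C.
      pose proof q_nz. pose proof (Cpow_nz k). field. auto.
    + simpl. change (Cinv q * w = Cplus (fmap n p a w) (Copp (a * Cinv (q * 1))))%C.
      unfold fmap. fold q. pose proof q_nz. field. auto.
Qed.

Lemma shift z : Lambda n p A z -> exists a w, In a A /\ Lambda n p A w /\ z = fmap n p a w.
Proof.
  intros [x [Hx Hs]].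
  exists (x O), (Cmult q (Cminus z (Cmult (x O) (Cinv q)))).
  split; [auto|split].
  - exists (fun j => x (S j)). split; [auto|].
    assert (H1 : is_series (fun k => Cmult (RtoC (x (S k))) (Cinv (Defs.Cpow q (S (S k)))))
                   (Cminus z (Cmult (x O) (Cinv q)))).
    { apply (is_series_incr_1 (fun j => Cmult (RtoC (x j)) (Cinv (Defs.Cpow q (S j))))).
      match goal with |- is_series _ ?L => replace L with z; [exact Hs|] end. simpl.
      change (z = Cplus (Cminus z (x O * Cinv q)) (x O * Cinv (q * 1)))%C.
      pose proof q_nz. field. auto. }
    apply (is_series_scal q) in H1.
    eapply is_series_ext; [|exact H1].
    intro k. simpl. change (q * (x (S k) * Cinv (q * (q * Defs.Cpow q k))) =
         x (S k) * Cinv (q * Defs.Cpow q k))%C.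
    pose proof q_nz. pose proof (Cpow_nz k). field. auto.
  - unfold fmap. fold q. pose proof q_nz. field. auto.
Qed.

Definition Msum := fold_right (fun a s => Rabs a + s) 0 A.

Lemma Msum_bound a : In a A -> Rabs a <= Msum.
Proof.
  unfold Msum. induction A as [|b l IH]; simpl; [tauto|].
  assert (0 <= fold_right (fun a s => Rabs a + s) 0 l).
  { clear. induction l; simpl. lra. pose proof (Rabs_pos a). lra. }
  intros [->|H']. lra. pose proof (Rabs_pos b). specialize (IH H'). lra.
Qed.

Lemma Msum_pos : 0 <= Msum.
Proof. unfold Msum. clear. induction A; simpl. lra. pose proof (Rabs_pos a). lra. Qed.

Definition Bnd := Msum / (p - 1).

Lemma Lambda_bound z : Lambda n p A z -> Cmod z <= Bnd.
Proof.
  intros [x [Hx Hs]].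
  set (T := fun j => Cmult (RtoC (x j)) (Cinv (Defs.Cpow q (S j)))).
  assert (HT : forall j, Cmod (T j) <= Msum * (/p) ^ (S j)).
  { intro j. unfold T. rewrite Cmod_mult, Cmod_R, Cmod_inv by apply Cpow_nz.
    rewrite Cmod_Cpow, <- pow_inv. apply Rmult_le_compat_r.
    apply pow_le. left; apply Rinv_0_lt_compat; lra. apply Msum_bound, Hx. }
  assert (HP : forall k, Cmod (sum_n T k) <= Bnd * (1 - (/p) ^ (S k))).
  { induction k.
    - rewrite sum_O. eapply Rle_trans. apply HT. unfold Bnd. right. simpl. field. lra.
    - rewrite sum_Sn. change (plus (sum_n T k) (T (S k))) with (Cplus (sum_n T k) (T (S k))).
      eapply Rle_trans. apply Cmod_triangle.
      assert (E : Bnd * (1 - (/p) ^ (S k)) + Msum * (/p) ^ (S (S k)) = Bnd * (1 - (/p) ^ (S (S k)))).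
      { unfold Bnd. simpl. field. lra. }
      specialize (HT (S k)). lra. }
  assert (Hl : is_lim_seq (fun k => norm (sum_n T k)) (norm z)).
  { eapply filterlim_comp. exact Hs. apply filterlim_norm. }
  pose proof (is_lim_seq_le (fun k => norm (sum_n T k)) (fun _ => Bnd) _ _ ltac:(intro k; eapply Rle_trans; [apply HP|];
     assert (0 <= Bnd) by (unfold Bnd; apply Rdiv_le_0_compat; [apply Msum_pos|lra]);
     assert (0 < (/p) ^ (S k)) by (apply pow_lt, Rinv_0_lt_compat; lra);
     rewrite <- (Rmult_1_r Bnd) at 2; apply Rmult_le_compat_l; lra)
     Hl (is_lim_seq_const Bnd)).
  exact H.
Qed.

End Aux.

Lemma conv_incl S z : S z -> conv S z.
Proof. intros H K _ HK. auto. Qed.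

Lemma conv_convex S : convex_set (conv S).
Proof. intros z w Hz Hw t Ht K HK HS. apply HK; [apply Hz|apply Hw|]; auto. Qed.

Lemma disk_convex B : convex_set (fun z => Cmod z <= B).
Proof.
  intros z w Hz Hw t Ht.
  eapply Rle_trans. apply Cmod_triangle. rewrite !Cmod_mult, !Cmod_R.
  rewrite Rabs_pos_eq by lra. rewrite (Rabs_pos_eq (1 - t)) by lra. nra.
Qed.

Lemma iter_seq (K : C -> Prop) (P : C -> R -> C -> Prop) :
  (forall w, K w -> exists a w', P w a w' /\ K w') ->
  forall z, K z -> exists (a : nat -> R) (zs : nat -> C),
    zs O = z /\ forall k, K (zs k) /\ P (zs k) (a k) (zs (S k)).
Proof.
  intros H z Hz.
  set (step := fun w => epsilon (inhabits (0, RtoC 0))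
                  (fun aw : R * C => P w (fst aw) (snd aw) /\ K (snd aw))).
  set (zs := fix f k := match k with O => z | S k => snd (step (f k)) end).
  exists (fun k => fst (step (zs k))), zs. split; [reflexivity|].
  assert (Hs : forall w, K w -> P w (fst (step w)) (snd (step w)) /\ K (snd (step w))).
  { intros w Hw.
    assert (Ex : exists aw : R * C, P w (fst aw) (snd aw) /\ K (snd aw)).
    { destruct (H w Hw) as [a [w' Hw']]. exists (a, w'). exact Hw'. }
    exact (epsilon_spec (inhabits (0, RtoC 0)) _ Ex). }
  assert (HK : forall k, K (zs k)).
  { induction k; simpl. exact Hz. apply Hs, IHk. }
  intro k. split; auto. apply (Hs _ (HK k)).
Qed.

Theorem lemma4p5 (n : nat) (p : R) (A : list R) :
  (1 <= n)%nat -> 1 < p -> A <> nil ->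
  (convex_set (Lambda n p A) <-> convex_set (Fop n p A (conv (Lambda n p A)))).
Proof.
  intros Hn Hp HA. set (q := qc n p). split.
  - intros HL.
    assert (E : forall z, Fop n p A (conv (Lambda n p A)) z <-> Lambda n p A z).
    { intro z. split.
      - intros [a [Ha [x [Hx ->]]]]. apply prepend; auto. apply Hx; auto.
      - intros Hz. destruct (shift n p A Hp z Hz) as [a [w [Ha [Hw ->]]]].
        exists a. split; auto. exists w. split; auto. apply conv_incl; auto. }
    intros z w Hz Hw t Ht. apply E. apply E in Hz. apply E in Hw. apply HL; auto.
  - intros HF.
    set (K := conv (Lambda n p A)).
    assert (KF : forall z, K z -> Fop n p A K z).
    { intros z Hz. apply Hz; auto. intros w Hw.
      destruct (shift n p A Hp w Hw) as [a [w' [Ha [Hw' ->]]]].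
      exists a. split; auto. exists w'. split; auto. apply conv_incl; auto. }
    assert (KB : forall z, K z -> Cmod z <= Bnd p A).
    { intros z Hz. apply Hz. apply disk_convex. intros w Hw. apply (Lambda_bound n); auto. }
    assert (KL : forall z, K z -> Lambda n p A z).
    { intros z Hz.
      destruct (iter_seq K (fun w a w' => In a A /\ w = fmap n p a w')
         ltac:(intros w Hw; destruct (KF w Hw) as [a [Ha [w' [Hw' ->]]]];
               exists a, w'; auto) z Hz) as [a [zs [H0 Hk]]].
      exists a. split. { intro j. apply (Hk j). }
      set (T := fun j => Cmult (RtoC (a j)) (Cinv (Defs.Cpow q (S j)))).
      pose proof (q_nz n p Hp) as Hq. fold q in Hq.
      assert (Hpz : forall k, Defs.Cpow q k <> RtoC 0) by (intro; apply Cpow_nz; auto).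
      assert (ID : forall k, z = Cplus (sum_n T k) (Cmult (Cinv (Defs.Cpow q (S k))) (zs (S k)))).
      { induction k.
        - rewrite sum_O. rewrite <- H0. destruct (Hk O) as [_ [_ E]]. rewrite E at 1.
          unfold fmap, T. fold q. simpl. field. auto.
        - rewrite sum_Sn. change (plus (sum_n T k) (T (S k))) with (Cplus (sum_n T k) (T (S k))).
          rewrite IHk at 1. destruct (Hk (S k)) as [_ [_ E]]. rewrite E at 1.
          unfold fmap, T. fold q. simpl. simpl in Hpz.
          pose proof (Hpz k). field. auto. }
      unfold is_series. apply filterlim_locally. intro eps.
      pose proof (Msum_pos A) as HM0.
      assert (HB0 : 0 <= Bnd p A) by (unfold Bnd; apply Rdiv_le_0_compat; lra).
      destruct (pow_lt_1_zero (/p) ltac:(rewrite Rabs_pos_eq; [rewrite <- Rinv_1; apply Rinv_lt_contravar; lra|left; apply Rinv_0_lt_compat; lra])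
                  (eps / (Bnd p A + 1)) ltac:(apply Rdiv_lt_0_compat; [apply cond_pos|lra])) as [N HN].
      exists N. intros k Hk'. apply norm_compat1.
      change (Cmod (Cminus (sum_n T k) z) < eps).
      rewrite (ID k) at 1.
      replace (Cminus (sum_n T k) (Cplus (sum_n T k) (Cmult (Cinv (Defs.Cpow q (S k))) (zs (S k)))))
        with (Copp (Cmult (Cinv (Defs.Cpow q (S k))) (zs (S k)))) by ring.
      replace (Copp (Cmult (Cinv (Defs.Cpow q (S k))) (zs (S k))))
        with (Cmult (RtoC (-1)) (Cmult (Cinv (Defs.Cpow q (S k))) (zs (S k)))).
      2:{ unfold RtoC, Cmult, Copp. simpl. f_equal; ring. }
      rewrite !Cmod_mult, Cmod_R, Cmod_inv by auto. pose proof (Cmod_Cpow n p Hp (S k)) as Hc; fold q in Hc; rewrite Hc.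
      replace (Rabs (-1)) with 1 by (rewrite Rabs_left; lra). rewrite Rmult_1_l.
      specialize (HN (S k) ltac:(lia)). rewrite Rabs_pos_eq in HN
        by (apply pow_le; left; apply Rinv_0_lt_compat; lra).
      rewrite pow_inv in HN.
      assert (Hpk : 0 < p ^ S k) by (apply pow_lt; lra).
      pose proof (KB _ (proj1 (Hk (S k)))).
      apply Rmult_lt_compat_r with (r := Bnd p A + 1) in HN; [|lra].
      unfold Rdiv in HN. rewrite Rmult_assoc, Rinv_l, Rmult_1_r in HN by lra.
      assert (Cmod (zs (S k)) * / p ^ S k <= (Bnd p A + 1) * / p ^ S k).
      { apply Rmult_le_compat_r. left; apply Rinv_0_lt_compat; lra. lra. }
      lra. }
    intros z w Hz Hw t Ht. apply KL. apply conv_convex; auto; apply conv_incl; auto.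
Qed.
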